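(* Let $\mathbb{G}$ and $\mathbb{H}$ be finite loopless graphs that are not 3-colorable, let $e=\{g,g'\}$ be a critical edge of $\mathbb{G}$ and $f=\{h,h'\}$ a critical edge of $\mathbb{H}$. Let $\mathbb{N}$ be a finite loopless graph with four distinct vertices $x,x',y,y'$ such that $\{x,x'\}$ and $\{y,y'\}$ are non-edges, and with an edge $d$, such that: (N1) every homomorphism $c:\mathbb{N}\to\mathbb{K}_3$ satisfies exactly one of $c(x)\neq c(x')$ and $c(y)\neq c(y')$; (N2) every map $c:\{x,x',y,y'\}\to\mathbb{K}_3$ satisfying exactly one of $c(x)\neq c(x')$, $c(y)\ne c(y')$ extends to a homomorphism $\mathbb{N}\to\mathbb{K}_3$; (N3) every map $c:\{x,x',y,y'\}\to\mathbb{K}_3$ with $c(x)=c(x')$ and $c(y)=c(y')$ extends to a homomorphism $\mathbb{N}-d\to\mathbb{K}_3$. Let $\mathbb{W}=(\mathbb{G},e)\oplus(\mathbb{H},f)$ be the graph obtained from the disjoint union of $\mathbb{G}-e$, $\mathbb{H}-f$ and $\mathbb{N}$ by identifying $g$ with $x$, $g'$ with $x'$, $h$ with $y$, and $h'$ with $y'$. Then: (1) $\mathbb{W}$ is not 3-colorable; (2) $d$ is a critical edge of $\mathbb{W}$; (3) $\Sigma_{\mathbb{W}}$ is implied by $\Sigma_{\mathbb{G}}$ and is implied by $\Sigma_{\mathbb{H}}$.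
   Context: A graph is a structure $(V,E)$ with a single symmetric binary relation $E$; $\mathbb{K}_3$ is the complete loopless graph on three vertices and a graph is 3-colorable if it admits a homomorphism to $\mathbb{K}_3$. For an edge $e$ of $\mathbb{M}$, $\mathbb{M}-e$ is the graph obtained by removing $e$; an edge $e$ of $\mathbb{M}$ is critical if $\mathbb{M}-e$ is 3-colorable. A clone on a set is a set of finitary operations containing all projections and closed under composition. A height 1 condition is a finite set of identities $f(x_{\pi(1)},\dots,x_{\pi(n)})\approx g(x_{\rho(1)},\dots,x_{\rho(m)})$ (function symbols, arbitrary maps $\pi,\rho$, universally quantified); a clone satisfies it if its symbols can be assigned functions of the clone of the right arities making all identities true; $\Sigma$ implies $\Sigma'$ if every clone satisfying $\Sigma$ satisfies $\Sigma'$. For a finite graph $\mathbb{G}=(V,E)$, $\Sigma_{\mathbb{G}}$ is the height 1 condition with a ternary symbol $f_v$ for each $v\in V$, a $6$-ary symbol $g_{(u,v)}$ for each $(u,v)\in E$, and, for each $(u,v)\in E$, the identities $f_u(x,y,z)\approx g_{(u,v)}(x,y,x,z,y,z)$ and $f_v(x,y,z)\approx g_{(u,v)}(y,x,z,x,z,y)$. *)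

(* Defs.v *)
From mathcomp Require Import all_boot.
Set Implicit Arguments. Unset Strict Implicit. Unset Printing Implicit Defensive.

Definition K3 : rel 'I_3 := fun i j => i != j.

Definition is_hom (V W : finType) (E : rel V) (F : rel W) (c : V -> W) : Prop :=
  forall u v, E u v -> F (c u) (c v).

Definition colorable3 (V : finType) (E : rel V) : Prop :=
  exists c : V -> 'I_3, is_hom E K3 c.

Definition remove_edge (V : finType) (E : rel V) (a b : V) : rel V :=
  fun u v => E u v && ~~ (((u == a) && (v == b)) || ((u == b) && (v == a))).

Definition critical_edge (V : finType) (E : rel V) (a b : V) : Prop :=
  E a b /\ colorable3 (remove_edge E a b).

Record clone (A : Type) := Clone {
  cmem : forall n : nat, (('I_n -> A) -> A) -> Prop;
  cproj : forall n (i : 'I_n), cmem (fun x => x i);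
  ccomp : forall n m (f : ('I_n -> A) -> A) (gs : 'I_n -> ('I_m -> A) -> A),
      cmem f -> (forall i, cmem (gs i)) -> cmem (fun x => f (fun i => gs i x))
}.

Arguments cmem {A} c n _.
Definition args {A : Type} (n : nat) (s : seq A) (d : A) : 'I_n -> A :=
  fun i => nth d s i.
Arguments args {A} n s d _.

Definition satSigma (V : finType) (E : rel V) (A : Type) (C : clone A) : Prop :=
  exists (f : V -> ('I_3 -> A) -> A) (g : V -> V -> ('I_6 -> A) -> A),
    (forall v, cmem C 3 (f v)) /\
    (forall u v, E u v -> cmem C 6 (g u v)) /\
    (forall u v, E u v -> forall x y z : A,
        f u (args 3 [:: x; y; z] x) = g u v (args 6 [:: x; y; x; z; y; z] x) /\
        f v (args 3 [:: x; y; z] x) = g u v (args 6 [:: y; x; z; x; z; y] x)).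

Definition h1_implies (S S' : forall A : Type, clone A -> Prop) : Prop :=
  forall (A : Type) (C : clone A), S A C -> S' A C.

Section Construction.
Variables (VG VH VN : finType) (EG : rel VG) (EH : rel VH) (EN : rel VN).
Variables (g g' : VG) (h h' : VH) (x x' y y' : VN).

Definition Nrest := {v : VN | v \notin [:: x; x'; y; y']}.

Definition Wvert : finType := (VG + VH + Nrest)%type.

Definition iG (u : VG) : Wvert := inl (inl u).
Definition iH (u : VH) : Wvert := inl (inr u).
Definition iN (v : VN) : Wvert :=
  match @insub VN (fun v => v \notin [:: x; x'; y; y']) Nrest v with
  | Some s => inr s
  | None => if v == x then iG g else if v == x' then iG g'
            else if v == y then iH h else iH h'
  end.

Definition Wadj : rel Wvert := fun u v =>
  [|| [exists a, [exists b, [&& remove_edge EG g g' a b, iG a == u & iG b == v]]],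
      [exists a, [exists b, [&& remove_edge EH h h' a b, iH a == u & iH b == v]]]
    | [exists a, [exists b, [&& EN a b, iN a == u & iN b == v]]]].

End Construction.
Arguments Wadj [VG VH VN] EG EH EN g g' h h' x x' y y' _ _.

(* Main.v *)
Require Import Defs.
From mathcomp Require Import all_boot.
From Stdlib Require Import FunctionalExtensionality.
Set Implicit Arguments. Unset Strict Implicit. Unset Printing Implicit Defensive.

Definition mu1 (p : 'I_6) : 'I_3 := inord (nth 0 [:: 0;1;0;2;1;2] p).
Definition mu2 (p : 'I_6) : 'I_3 := inord (nth 0 [:: 1;0;2;0;2;1] p).
Definition pos (a b : 'I_3) : 'I_6 := inord (index (nat_of_ord a, nat_of_ord b) [:: (0,1);(1,0);(0,2);(2,0);(1,2);(2,1)]).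
Lemma mu1pos : forall a b : 'I_3, a != b -> mu1 (pos a b) = a /\ mu2 (pos a b) = b.
Proof.
move=> [[|[|[|a]]] Ha] [[|[|[|b]]] Hb] //= _; split; apply/val_inj;
  rewrite /mu1 /mu2 /pos /= ?inordK //.
Qed.

Lemma args3 A (xs : 'I_3 -> A) :
  args 3 [:: xs (inord 0); xs (inord 1); xs (inord 2)] (xs (inord 0)) = xs.
Proof.
apply: functional_extensionality => -[[|[|[|i]]] Hi] //=; rewrite /args /=;
  congr xs; apply: val_inj; rewrite /= inordK //.
Qed.

Lemma args6a A (x y z : A) :
  args 6 [:: x; y; x; z; y; z] x = fun p => args 3 [:: x; y; z] x (mu1 p).
Proof.
apply: functional_extensionality => -[[|[|[|[|[|[|i]]]]]] Hi] //=;
  rewrite /args /mu1 /= inordK //.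
Qed.

Lemma args6b A (x y z : A) :
  args 6 [:: y; x; z; x; z; y] x = fun p => args 3 [:: x; y; z] x (mu2 p).
Proof.
apply: functional_extensionality => -[[|[|[|[|[|[|i]]]]]] Hi] //=;
  rewrite /args /mu2 /= inordK //.
Qed.

Definition satF (V : finType) (E : rel V) A (C : clone A) :=
  exists (f : V -> ('I_3 -> A) -> A) (g : V -> V -> ('I_6 -> A) -> A),
    [/\ (forall v, cmem C 3 (f v)),
        (forall u v, E u v -> cmem C 6 (g u v)) &
        (forall u v, E u v -> forall xs, f u xs = g u v (fun p => xs (mu1 p))
                                    /\ f v xs = g u v (fun p => xs (mu2 p)))].

Lemma satE (V : finType) (E : rel V) A (C : clone A) : satSigma E C -> satF E C.
Proof.
move=> [f [g [H1 [H2 H3]]]]; exists f, g; split => // u v Euv xs.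
have [e1 e2] := H3 u v Euv (xs (inord 0)) (xs (inord 1)) (xs (inord 2)).
split; first by rewrite -{1}(args3 xs) e1 args6a args3.
by rewrite -{1}(args3 xs) e2 args6b args3.
Qed.

Lemma satI (V : finType) (E : rel V) A (C : clone A) : satF E C -> satSigma E C.
Proof.
move=> [f [g [H1 H2 H3]]]; exists f, g; split => //; split => // u v Euv x y z.
have [e1 e2] := H3 u v Euv (args 3 [:: x; y; z] x).
by rewrite args6a args6b.
Qed.

Lemma kap_cmem A (C : clone A) n m (G0 : ('I_n -> A) -> A) (k : 'I_n -> 'I_m) :
  cmem C n G0 -> cmem C m (fun xs => G0 (fun p => xs (k p))).
Proof.
move=> c; have := @ccomp A C n m G0 (fun p (a : 'I_m -> A) => a (k p)) c (fun p => cproj C (k p)).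
exact.
Qed.

Lemma key (W : finType) (EW : rel W) A (C : clone A) (G0 : ('I_6 -> A) -> A)
  (E1 : rel W) (F1 : W -> ('I_3 -> A) -> A) (G1 : W -> W -> ('I_6 -> A) -> A)
  (Q : pred W) (kap : W -> 'I_6 -> 'I_3) :
 cmem C 6 G0 ->
 (forall w, cmem C 3 (F1 w)) ->
 (forall u v, E1 u v -> cmem C 6 (G1 u v)) ->
 (forall u v, E1 u v -> forall xs, F1 u xs = G1 u v (fun p => xs (mu1 p))
                                /\ F1 v xs = G1 u v (fun p => xs (mu2 p))) ->
 (forall w xs, Q w -> F1 w xs = G0 (fun p => xs (kap w p))) ->
 (forall u v, EW u v -> E1 u v \/ [/\ Q u, Q v & forall p, kap u p != kap v p]) ->
 satSigma EW C.
Proof.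
move=> cG0 cF1 cG1 iG1 QF hE; apply: satI.
exists F1, (fun u v => if E1 u v then G1 u v else
                 (fun a => G0 (fun p => a (pos (kap u p) (kap v p))))).
split => // u v Euv.
  case: ifP => [/cG1 //|_ /=].
  exact: kap_cmem.
move=> xs; case: ifP => [/iG1 //|nE].
have [//|[Qu Qv kd]] := hE u v Euv; first by rewrite nE.
rewrite !QF //; split; congr G0; apply: functional_extensionality => p;
  by have [e1 e2] := mu1pos (kd p); rewrite ?e1 ?e2.
Qed.


Lemma col_restore (V : finType) (E : rel V) (a b : V) (c : V -> 'I_3) :
  symmetric E -> is_hom (remove_edge E a b) K3 c -> c a != c b -> is_hom E K3 c.
Proof.
move=> sE hc ne u v Euv.
case Hr: (((u == a) && (v == b)) || ((u == b) && (v == a))).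
  case/orP: Hr => /andP[/eqP -> /eqP ->] //; by rewrite /K3 eq_sym.
by apply: hc; rewrite /remove_edge Euv Hr.
Qed.

Lemma uncol_eq (V : finType) (E : rel V) (a b : V) (c : V -> 'I_3) :
  symmetric E -> ~ colorable3 E -> is_hom (remove_edge E a b) K3 c -> c a = c b.
Proof.
move=> sE nc hc; apply/eqP; case: eqP => // /eqP ne; exfalso.
by apply: nc; exists c; exact: (col_restore sE hc ne).
Qed.


Lemma Wadj_cases (VG VH VN : finType) (EG : rel VG) (EH : rel VH) (EN : rel VN)
  g g' h h' (x x' y y' : VN) u v :
  Wadj EG EH EN g g' h h' x x' y y' u v ->
  (exists a b, [/\ remove_edge EG g g' a b, u = iG VH x x' y y' a & v = iG VH x x' y y' b]) \/
  (exists a b, [/\ remove_edge EH h h' a b, u = iH VG x x' y y' a & v = iH VG x x' y y' b]) \/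
  (exists a b, [/\ EN a b, u = iN g g' h h' x x' y y' a & v = iN g g' h h' x x' y y' b]).
Proof.
by case/or3P => /existsP [a /existsP [b /and3P [e /eqP <- /eqP <-]]];
  [left|right;left|right;right]; exists a, b.
Qed.

Lemma Wadj_G (VG VH VN : finType) (EG : rel VG) (EH : rel VH) (EN : rel VN)
  g g' h h' (x x' y y' : VN) a b : remove_edge EG g g' a b ->
  Wadj EG EH EN g g' h h' x x' y y' (iG VH x x' y y' a) (iG VH x x' y y' b).
Proof.
move=> e; apply/or3P; apply: Or31; apply/existsP; exists a; apply/existsP; exists b.
by rewrite e !eqxx.
Qed.

Lemma Wadj_H (VG VH VN : finType) (EG : rel VG) (EH : rel VH) (EN : rel VN)
  g g' h h' (x x' y y' : VN) a b : remove_edge EH h h' a b ->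
  Wadj EG EH EN g g' h h' x x' y y' (iH VG x x' y y' a) (iH VG x x' y y' b).
Proof.
move=> e; apply/or3P; apply: Or32; apply/existsP; exists a; apply/existsP; exists b.
by rewrite e !eqxx.
Qed.

Lemma Wadj_N (VG VH VN : finType) (EG : rel VG) (EH : rel VH) (EN : rel VN)
  g g' h h' (x x' y y' : VN) a b : EN a b ->
  Wadj EG EH EN g g' h h' x x' y y' (iN g g' h h' x x' y y' a) (iN g g' h h' x x' y y' b).
Proof.
move=> e; apply/or3P; apply: Or33; apply/existsP; exists a; apply/existsP; exists b.
by rewrite e !eqxx.
Qed.

Lemma iN_pts (VG VH VN : finType) (g g' : VG) (h h' : VH) (x x' y y' : VN) :
  uniq [:: x; x'; y; y'] ->
  [/\ iN g g' h h' x x' y y' x = iG VH x x' y y' g,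
      iN g g' h h' x x' y y' x' = iG VH x x' y y' g',
      iN g g' h h' x x' y y' y = iH VG x x' y y' h &
      iN g g' h h' x x' y y' y' = iH VG x x' y y' h'].
Proof.
rewrite /= !inE !negb_or => /and4P [/and3P [n1 n2 n3] /andP [n4 n5] n6 _].
rewrite /iN !insubN ?inE ?eqxx ?orbT //.
by rewrite ![x' == _]eq_sym ![y == _]eq_sym ![y' == _]eq_sym
  (negbTE n1) (negbTE n2) (negbTE n3) (negbTE n4) (negbTE n5) (negbTE n6).
Qed.

Lemma iN_transfer (VG VH VN : finType) (g g' : VG) (h h' : VH) (x x' y y' : VN)
  T (c : Wvert VG VH x x' y y' -> T) (cN : VN -> T) :
  c (iG VH x x' y y' g) = cN x -> c (iG VH x x' y y' g') = cN x' ->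
  c (iH VG x x' y y' h) = cN y -> c (iH VG x x' y y' h') = cN y' ->
  (forall s : Nrest x x' y y', c (inr s) = cN (val s)) ->
  forall v, c (iN g g' h h' x x' y y' v) = cN v.
Proof.
move=> e1 e2 e3 e4 e5 v; rewrite /iN; case: insubP => [s _ <- //|].
rewrite !inE; case: eqP => [-> //|_]; case: eqP => [-> //|_];
  case: eqP => [-> //|_]; case: eqP => [-> //|//].
Qed.

From Stdlib Require Import IndefiniteDescription.

Theorem lemmaA1
  (VG : finType) (EG : rel VG) (g g' : VG)
  (VH : finType) (EH : rel VH) (h h' : VH)
  (VN : finType) (EN : rel VN) (x x' y y' d1 d2 : VN)
  (* G: finite loopless graph, not 3-colorable, {g,g'} critical *)
  (symG : symmetric EG) (irrG : irreflexive EG)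
  (ncolG : ~ colorable3 EG) (critG : critical_edge EG g g')
  (* H: finite loopless graph, not 3-colorable, {h,h'} critical *)
  (symH : symmetric EH) (irrH : irreflexive EH)
  (ncolH : ~ colorable3 EH) (critH : critical_edge EH h h')
  (* N: finite loopless graph *)
  (symN : symmetric EN) (irrN : irreflexive EN)
  (distinct : uniq [:: x; x'; y; y'])
  (nexx : ~~ EN x x') (neyy : ~~ EN y y')
  (edge_d : EN d1 d2)
  (N1 : forall c : VN -> 'I_3, is_hom EN K3 c ->
          (c x != c x') (+) (c y != c y'))
  (N2 : forall a a' b b' : 'I_3, (a != a') (+) (b != b') ->
          exists c : VN -> 'I_3, [/\ is_hom EN K3 c,
            c x = a, c x' = a', c y = b & c y' = b'])
  (N3 : forall a b : 'I_3,
          exists c : VN -> 'I_3, [/\ is_hom (remove_edge EN d1 d2) K3 c,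
            c x = a, c x' = a, c y = b & c y' = b]) :
  let EW := Wadj EG EH EN g g' h h' x x' y y' in
  let dW1 := iN g g' h h' x x' y y' d1 in
  let dW2 := iN g g' h h' x x' y y' d2 in
  [/\ ~ colorable3 EW,
      critical_edge EW dW1 dW2,
      h1_implies (fun A C => satSigma EG C) (fun A C => satSigma EW C)
    & h1_implies (fun A C => satSigma EH C) (fun A C => satSigma EW C)].
Proof.
move=> EW dW1 dW2.
have [eGG [cG HcG]] := critG.
have [eHH [cH HcH]] := critH.
have cGeq : cG g = cG g' := uncol_eq symG ncolG HcG.
have cHeq : cH h = cH h' := uncol_eq symH ncolH HcH.
have gne : g != g' by apply/eqP => E; move: eGG; rewrite E irrG.
have hne : h != h' by apply/eqP => E; move: eHH; rewrite E irrH.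
have [px px' py py'] := iN_pts g g' h h' distinct.
split.
-
  move=> [c Hc].
  have homN : is_hom EN K3 (fun v => c (iN g g' h h' x x' y y' v)).
    by move=> a b e; apply: Hc; apply: Wadj_N.
  move: (N1 _ homN); rewrite px px' py py'.
  case: (c (iG VH x x' y y' g) =P c (iG VH x x' y y' g')) => /= [_ Hn|/eqP Hn _].
  + apply: ncolH; exists (fun u => c (iH VG x x' y y' u)).
    apply: (col_restore symH _ Hn).
    by move=> a b e; apply: Hc; apply: Wadj_H.
  + apply: ncolG; exists (fun u => c (iG VH x x' y y' u)).
    apply: (col_restore symG _ Hn).
    by move=> a b e; apply: Hc; apply: Wadj_G.
-
  split; first exact: Wadj_N.
  have [cN [HcN cNx cNx' cNy cNy']] := N3 (cG g) (cH h).
  pose c (w : Wvert VG VH x x' y y') := match w with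
    | inl (inl u) => cG u | inl (inr u) => cH u | inr s => cN (val s) end.
  have ct : forall v, c (iN g g' h h' x x' y y' v) = cN v.
    apply: iN_transfer => //=; by rewrite ?cNx ?cNx' ?cNy ?cNy'.
  exists c => u v /andP [e].
  case: (Wadj_cases e) => [[a [b [eab -> ->]]]|[[a [b [eab -> ->]]]|[a [b [eab -> ->]]]]] nrem.
  + exact: HcG.
  + exact: HcH.
  + rewrite !ct; apply: HcN; rewrite /remove_edge eab /=.
    apply: contra nrem => /orP [] /andP [/eqP -> /eqP ->]; by rewrite /dW1 /dW2 !eqxx ?orbT.
-
  move=> A C /satE [f [gg [Hf Hg Hfg]]].
  pose G0 := gg g g'.
  have cG0 : cmem C 6 G0 := Hg g g' eGG.
  have HG0 := Hfg g g' eGG.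
  pose b0 := cH h.
  have Hx : forall p, (mu1 p != mu2 p) (+) (b0 != b0).
    by move=> p; rewrite eqxx addbF; case: p => -[|[|[|[|[|[|i]]]]]] Hi //;
      apply/eqP => /(congr1 val); rewrite /= !inordK.
  have [s Hs] : exists s : 'I_6 -> VN -> 'I_3, forall p,
      [/\ is_hom EN K3 (s p), s p x = mu1 p, s p x' = mu2 p, s p y = b0 & s p y' = b0].
    exists (fun p => proj1_sig (constructive_indefinite_description _ (N2 _ _ _ _ (Hx p)))).
    by move=> p; exact: (proj2_sig (constructive_indefinite_description _ (N2 _ _ _ _ (Hx p)))).
  pose E1 (u v : Wvert VG VH x x' y y') := match u, v with
    | inl (inl a), inl (inl b) => remove_edge EG g g' a b | _, _ => false end.
  pose F1 (w : Wvert VG VH x x' y y') : ('I_3 -> A) -> A := match w with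
    | inl (inl a) => f a
    | inl (inr a) => fun xs => G0 (fun p => xs (cH a))
    | inr s0 => fun xs => G0 (fun p => xs (s p (val s0))) end.
  pose G1 (u v : Wvert VG VH x x' y y') : ('I_6 -> A) -> A := match u, v with
    | inl (inl a), inl (inl b) => gg a b | _, _ => G0 end.
  pose Q (w : Wvert VG VH x x' y y') := match w with
    | inl (inl a) => (a == g) || (a == g') | _ => true end.
  pose kap (w : Wvert VG VH x x' y y') : 'I_6 -> 'I_3 := match w with
    | inl (inl a) => if a == g then mu1 else mu2
    | inl (inr a) => fun _ => cH a
    | inr s0 => fun p => s p (val s0) end.
  have Qt : forall v, Q (iN g g' h h' x x' y y' v) = (fun _ => true) v.
    by apply: iN_transfer => //=; rewrite eqxx ?orbT.
  have kt : forall v, kap (iN g g' h h' x x' y y' v) = (fun v p => s p v) v.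
    apply: iN_transfer => //=; rewrite ?eqxx ?(negbTE gne) 1?eq_sym ?(negbTE gne);
      apply: functional_extensionality => p; have [_ e1 e2 e3 e4] := Hs p.
    - by rewrite e1.
    - by rewrite e2.
    - by rewrite e3.
    - by rewrite e4 /b0 cHeq.
  apply: (@key _ EW A C G0 E1 F1 G1 Q kap cG0).
  + by case=> [[a|a]|s0] /=; [apply: Hf | apply: kap_cmem | apply: kap_cmem].
  + by case=> [[a|a]|?] [[b|b]|?] //= e; apply: Hg; case/andP: e.
  + by case=> [[a|a]|?] [[b|b]|?] //= e; apply: Hfg; case/andP: e.
  + case=> [[a|a]|s0] xs //= Qa.
    case/orP: Qa => /eqP ->; first by rewrite eqxx; case: (HG0 xs).
    by rewrite eq_sym (negbTE gne); case: (HG0 xs).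
  + move=> u v /Wadj_cases [[a [b [e -> ->]]]|[[a [b [e -> ->]]]|[a [b [e -> ->]]]]].
    * by left.
    * by right; split => // p; apply: HcH.
    * right; rewrite !Qt !kt; split => // p; have [hs _ _ _ _] := Hs p; exact: hs.
-
  move=> A C /satE [f [gg [Hf Hg Hfg]]].
  pose G0 := gg h h'.
  have cG0 : cmem C 6 G0 := Hg h h' eHH.
  have HG0 := Hfg h h' eHH.
  pose a0 := cG g.
  have Hx : forall p, (a0 != a0) (+) (mu1 p != mu2 p).
    by move=> p; rewrite eqxx addFb; case: p => -[|[|[|[|[|[|i]]]]]] Hi //;
      apply/eqP => /(congr1 val); rewrite /= !inordK.
  have [s Hs] : exists s : 'I_6 -> VN -> 'I_3, forall p,
      [/\ is_hom EN K3 (s p), s p x = a0, s p x' = a0, s p y = mu1 p & s p y' = mu2 p].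
    exists (fun p => proj1_sig (constructive_indefinite_description _ (N2 _ _ _ _ (Hx p)))).
    by move=> p; exact: (proj2_sig (constructive_indefinite_description _ (N2 _ _ _ _ (Hx p)))).
  pose E1 (u v : Wvert VG VH x x' y y') := match u, v with
    | inl (inr a), inl (inr b) => remove_edge EH h h' a b | _, _ => false end.
  pose F1 (w : Wvert VG VH x x' y y') : ('I_3 -> A) -> A := match w with
    | inl (inr a) => f a
    | inl (inl a) => fun xs => G0 (fun p => xs (cG a))
    | inr s0 => fun xs => G0 (fun p => xs (s p (val s0))) end.
  pose G1 (u v : Wvert VG VH x x' y y') : ('I_6 -> A) -> A := match u, v with
    | inl (inr a), inl (inr b) => gg a b | _, _ => G0 end.
  pose Q (w : Wvert VG VH x x' y y') := match w with
    | inl (inr a) => (a == h) || (a == h') | _ => true end.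
  pose kap (w : Wvert VG VH x x' y y') : 'I_6 -> 'I_3 := match w with
    | inl (inr a) => if a == h then mu1 else mu2
    | inl (inl a) => fun _ => cG a
    | inr s0 => fun p => s p (val s0) end.
  have Qt : forall v, Q (iN g g' h h' x x' y y' v) = (fun _ => true) v.
    by apply: iN_transfer => //=; rewrite eqxx ?orbT.
  have kt : forall v, kap (iN g g' h h' x x' y y' v) = (fun v p => s p v) v.
    apply: iN_transfer => //=; rewrite ?eqxx 1?eq_sym ?(negbTE hne);
      apply: functional_extensionality => p; have [_ e1 e2 e3 e4] := Hs p.
    - by rewrite e1.
    - by rewrite e2 /a0 cGeq.
    - by rewrite e3.
    - by rewrite e4.
  apply: (@key _ EW A C G0 E1 F1 G1 Q kap cG0).
  + by case=> [[a|a]|s0] /=; [apply: kap_cmem | apply: Hf | apply: kap_cmem].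
  + by case=> [[a|a]|?] [[b|b]|?] //= e; apply: Hg; case/andP: e.
  + by case=> [[a|a]|?] [[b|b]|?] //= e; apply: Hfg; case/andP: e.
  + case=> [[a|a]|s0] xs //= Qa.
    case/orP: Qa => /eqP ->; first by rewrite eqxx; case: (HG0 xs).
    by rewrite eq_sym (negbTE hne); case: (HG0 xs).
  + move=> u v /Wadj_cases [[a [b [e -> ->]]]|[[a [b [e -> ->]]]|[a [b [e -> ->]]]]].
    * by right; split => // p; apply: HcG.
    * by left.
    * right; rewrite !Qt !kt; split => // p; have [hs _ _ _ _] := Hs p; exact: hs.
Qed.
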